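(* Let $N_1$ be a lattice, $M_1=\mathrm{Hom}(N_1,\mathbb Z)$, and let $(\sigma,\sigma^0)$ be a stacky fan in $N_{1,\mathbb R}$ whose fan consists of a simplicial cone $\sigma$ with $\dim\sigma=\mathrm{rk}N_1$ and its faces. Then the $(\sigma,\sigma^0)$-free resolution of $\sigma^\vee\cap M_1$ is given by the natural inclusion $$\sigma^\vee\cap M_1\to\{m\in M_1\otimes_{\mathbb Z}\mathbb Q:\langle m,n\rangle\in\mathbb Z_{\ge0}\text{ for all }n\in\sigma^0\}.$$
   Context: A stacky fan $(\Sigma,\Sigma^0)$ in $N_{\mathbb R}$: $\Sigma$ a finite simplicial fan, $\Sigma^0\subset|\Sigma|\cap N$ such that for each cone $\tau$, $\tau\cap\Sigma^0$ is a submonoid of $\tau\cap N$ isomorphic to $\mathbb N^{\dim\tau}$ and every element of $\tau\cap N$ has a positive multiple in it. For a ray $\rho$ with first nonzero lattice point $\zeta_\rho$, the level $n_\rho$ is the integer with $n_\rho\zeta_\rho$ the first nonzero point of $\rho\cap\Sigma^0$. A submonoid $S\subset P$ is close to $P$ if every element of $P$ has a positive multiple in $S$. For $P=\sigma^\vee\cap M_1$ (sharp, simplicially toric, of rank $d$), the minimal free resolution is the injective homomorphism $r:P\to F\cong\mathbb N^d$ with $r(P)$ close to $F$ such that every injective $j:P\to G\cong\mathbb N^d$ with close image factors uniquely as $j=\phi\circ r$. Each irreducible element $e$ of $F$ corresponds to the unique ray $\rho$ of $\sigma$ such that $\langle m,\zeta_\rho\rangle>0$ for $m\in P$ with $r(m)$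 a positive multiple of $e$; write $e_\rho$. The $(\sigma,\sigma^0)$-free resolution of $P$ is $t\circ r:P\to F$, where $t:F\to F$, $e_\rho\mapsto n_\rho e_\rho$. The claim means the displayed target is a free monoid of rank $d$ and the inclusion is isomorphic (under $P$) to $t\circ r$. *)

(* Defs.v *)
(* Lattice N_1 = Z^d (row vectors 'rV[int]_d), M_1 = Z^d with
   the standard pairing, M_1 (x) Q = 'rV[rat]_d. *)
From HB Require Import structures.
From mathcomp Require Import all_boot all_order all_algebra.
Set Implicit Arguments. Unset Strict Implicit. Unset Printing Implicit Defensive.
Import Order.TTheory GRing.Theory Num.Theory.

Section StackyDefs.
Variable d : nat.

Definition toQ (v : 'rV[int]_d) : 'rV[rat]_d := map_mx (fun z : int => (z%:~R : rat)) v.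

Definition pairQ (m v : 'rV[rat]_d) : rat := (\sum_(i < d) m ord0 i * v ord0 i)%R.

(* The simplicial cone sigma is generated by the rows zeta_i = row i Z of Z.
   in_face Z S v : v lies in the face tau_S = cone(zeta_i, i in S). *)
Definition in_face (Z : 'M[int]_d) (S : {set 'I_d}) (v : 'rV[rat]_d) : Prop :=
  exists a : 'I_d -> rat, (forall i, (0 <= a i)%R) /\ (forall i, i \notin S -> a i = 0%R) /\
    v = (\sum_(i < d) a i *: toQ (row i Z))%R.

Definition lattice_face (Z : 'M[int]_d) (S : {set 'I_d}) (v : 'rV[int]_d) : Prop :=
  in_face Z S (toQ v).

(* sigma simplicial of dimension d = rk N_1: its d generators are linearly independent *)
Definition simplicial_full (Z : 'M[int]_d) : Prop :=
  row_free (map_mx (fun z : int => (z%:~R : rat)) Z).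

Definition first_lattice_pt (z : 'rV[int]_d) : Prop :=
  z != 0%R /\ forall q : rat, (0 < q)%R ->
    (exists w : 'rV[int]_d, toQ w = (q *: toQ z)%R) -> (1 <= q)%R.

Definition free_monoid_iso (k : nat) (A : 'rV[int]_d -> Prop) : Prop :=
  exists f : ('I_k -> nat) -> 'rV[int]_d,
    (forall x y, f (fun i => (x i + y i)%N) = (f x + f y)%R) /\ injective f /\
    (forall v, A v <-> exists x, f x = v).

(* (sigma, S0) is a stacky fan, the fan being sigma and all its faces tau_S *)
Definition stacky_cone (Z : 'M[int]_d) (S0 : 'rV[int]_d -> Prop) : Prop :=
  (forall v, S0 v -> lattice_face Z setT v) /\
  forall S : {set 'I_d},
    let A := fun v => lattice_face Z S v /\ S0 v in
    A 0%R /\ (forall u v, A u -> A v -> A (u + v)%R) /\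
    free_monoid_iso #|S| A /\
    (forall v, lattice_face Z S v -> exists k : nat, (0 < k)%N /\ S0 (v *+ k)%R).

Definition is_level (Z : 'M[int]_d) (S0 : 'rV[int]_d -> Prop) (n : 'I_d -> nat) : Prop :=
  forall i, (0 < n i)%N /\ S0 (row i Z *+ n i)%R /\
    forall k, (0 < k)%N -> (k < n i)%N -> ~ S0 (row i Z *+ k)%R.

Definition dual_lattice (Z : 'M[int]_d) (m : 'rV[int]_d) : Prop :=
  forall v, in_face Z setT v -> (0 <= pairQ (toQ m) v)%R.

(* F = N^d as functions 'I_d -> nat *)
Definition hom_on (P : 'rV[int]_d -> Prop) (f : 'rV[int]_d -> 'I_d -> nat) : Prop :=
  (forall i, f 0%R i = 0%N) /\
  forall p q, P p -> P q -> forall i, f (p + q)%R i = (f p i + f q i)%N.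

Definition inj_on (P : 'rV[int]_d -> Prop) (f : 'rV[int]_d -> 'I_d -> nat) : Prop :=
  forall p q, P p -> P q -> (forall i, f p i = f q i) -> p = q.

Definition close_on (P : 'rV[int]_d -> Prop) (f : 'rV[int]_d -> 'I_d -> nat) : Prop :=
  forall x : 'I_d -> nat, exists k : nat, (0 < k)%N /\
    exists p, P p /\ forall i, f p i = (k * x i)%N.

Definition nat_hom (phi : ('I_d -> nat) -> 'I_d -> nat) : Prop :=
  (forall i, phi (fun _ => 0%N) i = 0%N) /\
  forall x y i, phi (fun k => (x k + y k)%N) i = (phi x i + phi y i)%N.

Definition min_free_res (P : 'rV[int]_d -> Prop) (r : 'rV[int]_d -> 'I_d -> nat) : Prop :=
  hom_on P r /\ inj_on P r /\ close_on P r /\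
  forall j, hom_on P j -> inj_on P j -> close_on P j ->
    exists phi, nat_hom phi /\ (forall p, P p -> forall i, j p i = phi (r p) i) /\
      forall psi, nat_hom psi -> (forall p, P p -> forall i, j p i = psi (r p) i) ->
        forall x i, psi x i = phi x i.

Definition ray_prop (Z : 'M[int]_d) (P : 'rV[int]_d -> Prop) (r : 'rV[int]_d -> 'I_d -> nat)
  (i j : 'I_d) : Prop :=
  forall m, P m -> forall k : nat, (0 < k)%N -> (forall l, r m l = (k * (l == i))%N) ->
    (0 < pairQ (toQ m) (toQ (row j Z)))%R.

Definition corr_ray Z P r (i j : 'I_d) : Prop :=
  ray_prop Z P r i j /\ forall j', ray_prop Z P r i j' -> j' = j.

Definition target (S0 : 'rV[int]_d -> Prop) (m : 'rV[rat]_d) : Prop :=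
  forall v, S0 v -> exists z : nat, pairQ m (toQ v) = (z%:R)%R.

End StackyDefs.

(* Main.v *)
Require Import Defs.
From HB Require Import structures.
From mathcomp Require Import all_boot all_order all_algebra zify.
From Stdlib Require Import FunctionalExtensionality.
Set Implicit Arguments. Unset Strict Implicit. Unset Printing Implicit Defensive.
Import Order.TTheory GRing.Theory Num.Theory.
Local Open Scope ring_scope.

Definition ZQ d (Z : 'M[int]_d) : 'M[rat]_d := map_mx (fun z : int => (z%:~R : rat)) Z.

Lemma toQ_row d (Z : 'M[int]_d) j : toQ (row j Z) = row j (ZQ Z).
Proof. by apply/matrixP => a b; rewrite !mxE. Qed.

Lemma toQD d (u v : 'rV[int]_d) : toQ (u + v) = toQ u + toQ v.
Proof. by apply/matrixP => a b; rewrite !mxE rmorphD. Qed.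

Lemma toQ0 d : toQ (0 : 'rV[int]_d) = 0.
Proof. by apply/matrixP => a b; rewrite !mxE. Qed.

Lemma toQMn d (u : 'rV[int]_d) k : toQ (u *+ k) = (k%:R : rat) *: toQ u.
Proof. by apply/matrixP => a b; rewrite !mxE mulmxnE rmorphMn mulr_natl. Qed.

Lemma toQ_inj d : injective (@toQ d).
Proof.
move=> u v /matrixP H; apply/matrixP => a b; have := H a b; rewrite !mxE.
exact: intr_inj.
Qed.

Lemma pairQE d (m v : 'rV[rat]_d) : pairQ m v = (m *m v^T) 0 0.
Proof. by rewrite /pairQ mxE; apply: eq_bigr => i _; rewrite mxE. Qed.

Lemma pairQDl d (m1 m2 v : 'rV[rat]_d) : pairQ (m1 + m2) v = pairQ m1 v + pairQ m2 v.
Proof. by rewrite !pairQE mulmxDl mxE. Qed.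

Lemma pairQDr d (m v1 v2 : 'rV[rat]_d) : pairQ m (v1 + v2) = pairQ m v1 + pairQ m v2.
Proof. by rewrite !pairQE linearD mulmxDr mxE. Qed.

Lemma pairQZr d (m v : 'rV[rat]_d) a : pairQ m (a *: v) = a * pairQ m v.
Proof. by rewrite !pairQE linearZ /= -scalemxAr mxE. Qed.

Lemma pairQZl d (m v : 'rV[rat]_d) a : pairQ (a *: m) v = a * pairQ m v.
Proof. by rewrite !pairQE -scalemxAl mxE. Qed.

Lemma pairQ0r d (m : 'rV[rat]_d) : pairQ m 0 = 0.
Proof. by rewrite pairQE linear0 mulmx0 mxE. Qed.

Lemma pairQsumr d (m : 'rV[rat]_d) (I : finType) (F : I -> 'rV[rat]_d) :
  pairQ m (\sum_i F i) = \sum_i pairQ m (F i).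
Proof.
elim/big_rec2: _ => [|i x y _ <-]; first exact: pairQ0r.
by rewrite pairQDr.
Qed.

Definition pairZ d (p v : 'rV[int]_d) : int := \sum_(i < d) p 0 i * v 0 i.

Lemma pairQZ d (p v : 'rV[int]_d) : pairQ (toQ p) (toQ v) = (pairZ p v)%:~R.
Proof. by rewrite /pairQ /pairZ rmorph_sum; apply: eq_bigr => i _; rewrite !mxE rmorphM. Qed.

Lemma pairQ_ZQ d (Z : 'M[int]_d) m j : pairQ m (row j (ZQ Z)) = (m *m (ZQ Z)^T) 0 j.
Proof. by rewrite pairQE !mxE; apply: eq_bigr => i _; rewrite !mxE. Qed.

Lemma ZQ_unit d (Z : 'M[int]_d) : simplicial_full Z -> ZQ Z \in unitmx.
Proof. by rewrite /simplicial_full row_free_unit. Qed.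

Lemma pair_uniq d (Z : 'M[int]_d) m1 m2 : simplicial_full Z ->
  (forall j, pairQ m1 (row j (ZQ Z)) = pairQ m2 (row j (ZQ Z))) -> m1 = m2.
Proof.
move=> /ZQ_unit U H.
have U' : (ZQ Z)^T \in unitmx by rewrite unitmx_tr.
have : m1 *m (ZQ Z)^T = m2 *m (ZQ Z)^T.
  by apply/matrixP => a b; rewrite (ord1 a) -!pairQ_ZQ.
by move/(congr1 (mulmx^~ (invmx (ZQ Z)^T))); rewrite !mulmxK.
Qed.

Lemma pair_exists d (Z : 'M[int]_d) (c : 'I_d -> rat) : simplicial_full Z ->
  exists m, forall j, pairQ m (row j (ZQ Z)) = c j.
Proof.
move=> /ZQ_unit U.
have U' : (ZQ Z)^T \in unitmx by rewrite unitmx_tr.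
exists ((\row_j c j) *m invmx (ZQ Z)^T) => j.
by rewrite pairQ_ZQ mulmxKV // mxE.
Qed.

Lemma sum_rowE d (Z : 'M[int]_d) (a : 'I_d -> rat) :
  \sum_i a i *: row i (ZQ Z) = (\row_i a i) *m ZQ Z.
Proof. by rewrite mulmx_sum_row; apply: eq_bigr => i _; rewrite mxE. Qed.

Definition coefQ d (Z : 'M[int]_d) (v : 'rV[rat]_d) j := (v *m invmx (ZQ Z)) 0 j.

Lemma coefQ_sum d (Z : 'M[int]_d) (a : 'I_d -> rat) j : simplicial_full Z ->
  coefQ Z (\sum_i a i *: row i (ZQ Z)) j = a j.
Proof. by move=> /ZQ_unit U; rewrite /coefQ sum_rowE mulmxK // mxE. Qed.
Lemma natq (q : rat) (z : nat) : q = z%:R -> `|numq q|%N = z.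
Proof. move=> ->; have -> : (z%:R : rat) = (z%:Z)%:~R by rewrite pmulrn.
by rewrite numq_int. Qed.

Lemma add_fun_sum K (V : zmodType) (f : ('I_K -> nat) -> V) :
  (forall x y, f (fun i => (x i + y i)%N) = f x + f y) ->
  forall x, f x = \sum_k f (fun l => (l == k : nat)) *+ x k.
Proof.
move=> H.
have f0 : f (fun _ => 0%N) = 0.
  have := H (fun _ => 0%N) (fun _ => 0%N) => /= E.
  by apply/eqP; rewrite -(addrI (f (fun _ => 0%N)) (etrans (esym E) (esym (addr0 _)))) eqxx.
have fsc : forall y c, f (fun l => (c * y l)%N) = f y *+ c.
  move=> y; elim=> [|c IH].
    by rewrite mulr0n -f0; congr f; apply: functional_extensionality => l; rewrite mul0n.
  rewrite mulrS -IH -H; congr f; apply: functional_extensionality => l; by rewrite mulSn.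
have fs : forall (s : seq 'I_K) (F : 'I_K -> 'I_K -> nat),
    f (fun l => (\sum_(k <- s) F k l)%N) = \sum_(k <- s) f (F k).
  move=> s F; elim: s => [|k s IH].
    by rewrite big_nil -f0; congr f; apply: functional_extensionality => l; rewrite big_nil.
  rewrite big_cons -IH -H; congr f; apply: functional_extensionality => l; by rewrite big_cons.
move=> x.
have -> : x = (fun l => (\sum_(k < K) x k * (l == k))%N).
  apply: functional_extensionality => l.
  rewrite (bigD1 l) //= eqxx muln1 big1 ?addn0 // => k /negbTE.
  by rewrite eq_sym => ->; rewrite muln0.
rewrite fs; apply: eq_bigr => k _.
rewrite -fsc; congr f; apply: functional_extensionality => l.
rewrite (bigD1 k) //= eqxx muln1 big1 ?addn0 // => k' /negbTE.
by rewrite eq_sym => ->; rewrite muln0.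
Qed.

Lemma coefQ_spec d (Z : 'M[int]_d) v : simplicial_full Z ->
  v = \sum_i coefQ Z v i *: row i (ZQ Z).
Proof.
move=> /ZQ_unit U; rewrite sum_rowE.
have -> : \row_i coefQ Z v i = v *m invmx (ZQ Z).
  by apply/matrixP => a b; rewrite (ord1 a) mxE.
by rewrite mulmxKV.
Qed.

Lemma sum_toQ_row d (Z : 'M[int]_d) (a : 'I_d -> rat) :
  \sum_i a i *: toQ (row i Z) = \sum_i a i *: row i (ZQ Z).
Proof. by apply: eq_bigr => i _; rewrite toQ_row. Qed.

Lemma in_faceT d (Z : 'M[int]_d) v : simplicial_full Z -> in_face Z setT v ->
  forall j, 0 <= coefQ Z v j.
Proof. by move=> F [a [Ha [_ ->]]] j; rewrite sum_toQ_row coefQ_sum. Qed.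

Lemma in_faceT_intro d (Z : 'M[int]_d) a : (forall j, 0 <= a j) ->
  in_face Z setT (\sum_i a i *: row i (ZQ Z)).
Proof.
move=> H; exists a; split => //; split => [i|]; first by rewrite in_setT.
by rewrite sum_toQ_row.
Qed.

Lemma row_sum d (Z : 'M[int]_d) j : row j (ZQ Z) = \sum_i (i == j)%:R *: row i (ZQ Z).
Proof.
rewrite (bigD1 j) //= eqxx scale1r big1 ?addr0 // => i /negbTE ->.
by rewrite scale0r.
Qed.

Lemma dualP d (Z : 'M[int]_d) p :
  dual_lattice Z p <-> forall j, 0 <= pairQ (toQ p) (row j (ZQ Z)).
Proof.
split.
  move=> H j; apply: H; rewrite row_sum; apply: in_faceT_intro => i; exact: ler0n.
move=> H v [a [Ha [_ ->]]]; rewrite pairQsumr; apply: sumr_ge0 => i _.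
by rewrite pairQZr toQ_row mulr_ge0.
Qed.

Lemma clear_den d (m : 'rV[rat]_d) :
  exists k : nat, (0 < k)%N /\ exists p, toQ p = k%:R *: m.
Proof.
set k := (\prod_(i < d) `|denq (m ord0 i)|)%N.
have Dk : forall i, (`|denq (m ord0 i)| %| k)%N.
  by move=> i; rewrite /k (bigD1 i) //= dvdn_mulr.
exists k; split.
  by rewrite prodn_gt0 // => i; rewrite absz_gt0 denq_neq0.
exists (\row_i (numq (m ord0 i) * ((k %/ `|denq (m ord0 i)|)%N)%:Z)).
apply/matrixP => a i; rewrite (ord1 a) !mxE rmorphM /=.
have DE : ((`|denq (m ord0 i)|)%N%:R : rat) = (denq (m ord0 i))%:~R.
  by rewrite natr_absz gtr0_norm ?denq_gt0.
rewrite -{2}(divnK (Dk i)) natrM DE -mulrA [_ * m ord0 i]mulrC -numqE mulrC.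
by rewrite pmulrn.
Qed.

Lemma sum_gt0_ex (I : finType) (F : I -> rat) : (forall i, 0 <= F i) ->
  0 < \sum_i F i -> exists i, 0 < F i.
Proof.
move=> H; case: (boolP [exists i, 0 < F i]) => [/existsP //|/existsPn N].
have -> : \sum_i F i = 0 by apply: big1 => i _; apply/eqP; rewrite eq_le H andbT leNgt N.
by rewrite ltxx.
Qed.

Lemma sumn_gt0_ex (I : finType) (F : I -> nat) :
  (0 < \sum_i F i)%N -> exists i, (0 < F i)%N.
Proof.
case: (boolP [exists i, 0 < F i]%N) => [/existsP //|/existsPn N].
have -> : (\sum_i F i = 0)%N by apply: big1 => i _; apply/eqP; rewrite -leqn0 leqNgt N.
by [].
Qed.

Definition ev d (Z : 'M[int]_d) (p : 'rV[int]_d) j : nat := `|pairZ p (row j Z)|%N.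

Lemma pairQ0l d (v : 'rV[rat]_d) : pairQ 0 v = 0.
Proof. by rewrite pairQE mul0mx mxE. Qed.

Lemma dual0 d (Z : 'M[int]_d) : dual_lattice Z 0.
Proof. by apply/dualP => j; rewrite toQ0 pairQ0l. Qed.

Lemma dualD d (Z : 'M[int]_d) p q : dual_lattice Z p -> dual_lattice Z q ->
  dual_lattice Z (p + q).
Proof.
move=> /dualP Hp /dualP Hq; apply/dualP => j.
by rewrite toQD pairQDl addr_ge0.
Qed.

Lemma evE d (Z : 'M[int]_d) p j : dual_lattice Z p ->
  ((ev Z p j)%:R : rat) = pairQ (toQ p) (row j (ZQ Z)).
Proof.
move=> /dualP H; have := H j; rewrite -toQ_row pairQZ => H0.
rewrite /ev natr_absz ger0_norm //.
by rewrite -(ler0z rat).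
Qed.

Lemma nat_inj_rat (a b : nat) : (a%:R : rat) = b%:R -> a = b.
Proof. by move/eqP; rewrite eqr_nat => /eqP. Qed.

Lemma ev_hom d (Z : 'M[int]_d) : hom_on (dual_lattice Z) (ev Z).
Proof.
split.
  by move=> i; rewrite /ev /pairZ big1 // => k _; rewrite mxE mul0r.
move=> p q Hp Hq i; apply: nat_inj_rat.
have Hpq : dual_lattice Z (p + q) by apply: dualD.
rewrite natrD !evE //.
by rewrite -pairQDl; congr pairQ; apply: toQD.
Qed.

Lemma ev_inj d (Z : 'M[int]_d) : simplicial_full Z -> inj_on (dual_lattice Z) (ev Z).
Proof.
move=> F p q Hp Hq H; apply: toQ_inj; apply: (pair_uniq F) => j.
by rewrite -!evE // H.
Qed.

Lemma ev_close d (Z : 'M[int]_d) : simplicial_full Z -> close_on (dual_lattice Z) (ev Z).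
Proof.
move=> F x.
have [m Hm] := pair_exists (fun j => (x j)%:R : rat) F.
have [k [k0 [p Hp]]] := clear_den m.
have Pj : forall j, pairQ (toQ p) (row j (ZQ Z)) = (k * x j)%:R.
  by move=> j; rewrite Hp pairQZl Hm natrM.
have Pp : dual_lattice Z p by apply/dualP => j; rewrite Pj ler0n.
exists k; split => //; exists p; split => // i.
by apply: nat_inj_rat; rewrite evE // Pj.
Qed.

Lemma nat_hom_sum K (g : ('I_K -> nat) -> nat) :
  (forall x y, g (fun k => (x k + y k)%N) = (g x + g y)%N) ->
  forall x, g x = (\sum_k x k * g (fun l => (l == k : nat)))%N.
Proof.
move=> H x.
have := @add_fun_sum K int (fun x => (g x)%:Z) (fun x y => etrans (congr1 Posz (H x y)) (PoszD _ _)) x.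
move=> /= E; apply/eqP; rewrite -eqz_nat E -natz natr_sum; apply/eqP.
by apply: eq_bigr => k _; rewrite natrM mulr_natl natz.
Qed.

Lemma sum_delta d (k : 'I_d) (c : nat) (F : 'I_d -> nat) :
  (\sum_l (c * (l == k)) * F l)%N = (c * F k)%N.
Proof.
rewrite (bigD1 k) //= eqxx muln1 big1 ?addn0 // => l /negbTE ->.
by rewrite muln0 mul0n.
Qed.

Lemma ev_r d (Z : 'M[int]_d) (r : 'rV[int]_d -> 'I_d -> nat) (rho : 'I_d -> 'I_d) :
  simplicial_full Z -> (forall i, first_lattice_pt (row i Z)) ->
  min_free_res (dual_lattice Z) r ->
  (forall i, corr_ray Z (dual_lattice Z) r i (rho i)) ->
  injective rho /\ forall p, dual_lattice Z p -> forall i, r p i = ev Z p (rho i).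
Proof.
move=> F Hfirst [rhom [rinj [rclose Huniv]]] Hrho.
have [phi [[phi0 phiD] [Hphi _]]] := Huniv (ev Z) (ev_hom Z) (ev_inj F) (ev_close F).
pose a j k := phi (fun l => (l == k : nat)) j.
have phiE : forall x j, phi x j = (\sum_k x k * a j k)%N.
  move=> x j; exact: (nat_hom_sum (g := fun x => phi x j) (fun x y => phiD x y j)).
have evphi : forall p, dual_lattice Z p -> forall j, ev Z p j = (\sum_k r p k * a j k)%N.
  by move=> p Hp j; rewrite Hphi // phiE.
pose Q j k := (0 < a j k)%N && [forall l, (l != j) ==> (a l k == 0%N)].
have HQ : forall j, exists k, Q j k.
  move=> j; have [c [c0 [q [Pq Hq]]]] := ev_close F (fun l => (l == j : nat)).
  have := Hq j; rewrite eqxx muln1 evphi // => Ej.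
  have [k Hk] : exists k, (0 < r q k * a j k)%N by apply: sumn_gt0_ex; rewrite Ej.
  exists k; rewrite /Q; apply/andP; split.
    by move: Hk; rewrite muln_gt0 => /andP[].
  apply/forallP => l; apply/implyP => Hl.
  have := Hq l; rewrite (negbTE Hl) muln0 evphi // => /eqP; rewrite sum_nat_eq0 => /forallP /(_ k) /=.
  by rewrite muln_eq0 => /orP [/eqP E|//]; move: Hk; rewrite E.
pose kap j := odflt j [pick k | Q j k].
have Hkap : forall j, Q j (kap j).
  move=> j; rewrite /kap; case: pickP => [k //|N] /=.
  by have [k Hk] := HQ j; move: (N k); rewrite Hk.
have kinj : injective kap.
  move=> j1 j2 E; apply/eqP; apply/negPn/negP => Hne.
  have /andP [_ /forallP /(_ j2)] := Hkap j1.
  rewrite eq_sym Hne /= E => /eqP E2.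
  by have /andP [] := Hkap j2; rewrite E2.
have [kinv kK kinvK] := injF_bij kinj.
have aoff : forall j k, k != kap j -> a j k = 0%N.
  move=> j k Hk; have /andP [_ /forallP /(_ j)] := Hkap (kinv k).
  rewrite kinvK; case: eqP => [Ej|_ /eqP //]; by move: Hk; rewrite Ej kinvK eqxx.
have evs : forall p, dual_lattice Z p -> forall j, ev Z p j = (r p (kap j) * a j (kap j))%N.
  move=> p Hp j; rewrite evphi // (bigD1 (kap j)) //= big1 ?addn0 // => k Hk.
  by rewrite aoff // muln0.
have a1 : forall j, a j (kap j) = 1%N.
  move=> j; set A := a j (kap j).
  have A0 : (0 < A)%N by have /andP [] := Hkap j.
  have [c [c0 [w [Pw Hw]]]] := ev_close F (fun _ => 1%N).
  have Hdiv : forall i, (A%:Z %| Z j i)%Z.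
    move=> i.
    pose M := (\sum_l `|Z l i|)%N.
    pose dl : 'rV[int]_d := delta_mx 0 i.
    have pd : forall l, pairQ (toQ dl) (row l (ZQ Z)) = (Z l i)%:~R.
      move=> l; rewrite -toQ_row pairQZ /pairZ (bigD1 i) //= big1 ?addr0.
        by rewrite !mxE /= !eqxx mul1r.
      by move=> k /negbTE Hk; rewrite !mxE Hk andbF mul0r.
    have PwM : dual_lattice Z (w *+ M).
      apply/dualP => l; rewrite toQMn pairQZl -evE // Hw muln1.
      by rewrite -natrM ler0n.
    have tD : toQ (dl + w *+ M) = toQ dl + toQ (w *+ M) by apply: toQD.
    have Pp : dual_lattice Z (dl + w *+ M).
      apply/dualP => l.
      rewrite tD pairQDl pd toQMn pairQZl -evE // Hw muln1 -natrM [X in _ + X]pmulrn -rmorphD /=.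
      rewrite ler0z.
      have H1 : (`|Z l i| <= M)%N by rewrite /M (bigD1 l) //= leq_addr.
      have H3 : (M <= M * c)%N by rewrite leq_pmulr.
      lia.
    have E1 := evs _ Pp j; have E2 := evs _ PwM j.
    have EQ : ((Z j i)%:~R : rat) = (ev Z (dl + w *+ M) j)%:R - (ev Z (w *+ M) j)%:R.
      by rewrite !evE // tD pairQDl pd addrK.
    apply/dvdzP; exists ((r (dl + w *+ M) (kap j))%:Z - (r (w *+ M) (kap j))%:Z).
    apply: (@intr_inj rat); rewrite EQ E1 E2 intrM intrB -!pmulrn !natrM.
    by rewrite mulrBl.
  pose u : 'rV[int]_d := \row_i ((Z j i) %/ A%:Z)%Z.
  have Anz : (A%:R : rat) != 0 by rewrite pnatr_eq0 -lt0n.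
  have Hu : toQ u = (A%:R : rat)^-1 *: toQ (row j Z).
    apply/matrixP => a' i; rewrite !mxE.
    rewrite -{2}(divzK (Hdiv i)) intrM.
    have -> : ((A%:Z)%:~R : rat) = A%:R by rewrite pmulrn.
    by rewrite mulrCA mulVf // mulr1.
  have := (Hfirst j).2 ((A%:R : rat)^-1); rewrite invr_gt0 ltr0n => /(_ A0).
  move=> /(_ (ex_intro _ u Hu)); rewrite invf_ge1 ?ltr0n // lern1 => HA.
  by apply/eqP; rewrite eqn_leq HA A0.
have kr : forall i, kap (rho i) = i.
  move=> i; have [_ U] := Hrho i.
  suff -> : rho i = kinv i by rewrite kinvK.
  symmetry; apply: U => m Pm k k0 Hm.
  by rewrite toQ_row -evE // evs // a1 muln1 kinvK Hm eqxx muln1 ltr0n.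
split; first exact: can_inj kr.
by move=> p Hp i; rewrite evs // a1 muln1 kr.
Qed.

Lemma toQB d (u v : 'rV[int]_d) : toQ (u - v) = toQ u - toQ v.
Proof. by apply/matrixP => a b; rewrite !mxE rmorphB. Qed.

Lemma toQ_sum d (I : finType) (V : I -> 'rV[int]_d) : toQ (\sum_k V k) = \sum_k toQ (V k).
Proof.
elim/big_rec2: _ => [|i x y _ <-]; first exact: toQ0.
by rewrite toQD.
Qed.

Lemma coefQ_lin d (Z : 'M[int]_d) (I : finType) (c : I -> rat) (V : I -> 'rV[rat]_d) l :
  coefQ Z (\sum_k c k *: V k) l = \sum_k c k * coefQ Z (V k) l.
Proof.
rewrite /coefQ mulmx_suml summxE; apply: eq_bigr => k _.
by rewrite -scalemxAl mxE.
Qed.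

Lemma coefQZ d (Z : 'M[int]_d) (c : rat) v l : coefQ Z (c *: v) l = c * coefQ Z v l.
Proof. by rewrite /coefQ -scalemxAl mxE. Qed.

Lemma coef_row d (Z : 'M[int]_d) j l : simplicial_full Z ->
  coefQ Z (row j (ZQ Z)) l = (l == j)%:R.
Proof. by move=> F; rewrite row_sum coefQ_sum. Qed.

Lemma S0_gen d (Z : 'M[int]_d) (S0 : 'rV[int]_d -> Prop) (n : 'I_d -> nat) :
  simplicial_full Z -> (forall i, first_lattice_pt (row i Z)) ->
  stacky_cone Z S0 -> is_level Z S0 n ->
  forall v, S0 v -> exists x : 'I_d -> nat,
    toQ v = \sum_j (x j * n j)%:R *: row j (ZQ Z).
Proof.
move=> F Hfirst [HS0 Hst] Hlev.
have [_ [_ [Hfree _]]] := Hst setT.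
rewrite cardsT card_ord in Hfree.
have [f [fadd [finj fA]]] := Hfree.
pose g k := f (fun l => (l == k : nat)).
have fsum : forall x, f x = \sum_k g k *+ x k.
  by move=> x; apply: (@add_fun_sum d _ f) => x' y'; apply: fadd.
have gA : forall k, lattice_face Z setT (g k) /\ S0 (g k).
  by move=> k; apply/(fA (g k)); exists (fun l => (l == k : nat)).
pose b k l := coefQ Z (toQ (g k)) l.
have bge : forall k l, 0 <= b k l by move=> k l; exact: (in_faceT F (gA k).1 l).
have gE : forall k, toQ (g k) = \sum_l b k l *: row l (ZQ Z).
  by move=> k; apply: coefQ_spec.
have coefg : forall x l, coefQ Z (toQ (f x)) l = \sum_k (x k)%:R * b k l.
  move=> x l; rewrite fsum toQ_sum.
  rewrite (eq_bigr (fun k => (x k)%:R *: toQ (g k))); last by move=> k _; rewrite toQMn.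
  by rewrite coefQ_lin.
have Ec : forall j, exists x : 'I_d -> nat, forall l,
    \sum_k (x k)%:R * b k l = (n j)%:R * (l == j)%:R.
  move=> j; have Sj := (Hlev j).2.1.
  have [x Hx] := (fA _).1 (conj (HS0 _ Sj) Sj).
  exists x => l; rewrite -coefg Hx toQMn coefQZ toQ_row coef_row //.
pose Qb j k := (0 < b k j) && [forall l, (l != j) ==> (b k l == 0)].
have HQ : forall j, exists k, Qb j k.
  move=> j; have [x Hx] := Ec j.
  have nj0 : (0 < n j)%N := (Hlev j).1.
  have tge : forall l k, 0 <= (x k)%:R * b k l by move=> l k; rewrite mulr_ge0.
  have [k Hk] : exists k, 0 < (x k)%:R * b k j.
    by apply: sum_gt0_ex => //; rewrite Hx eqxx mulr1 ltr0n.
  have xk0 : (0 : rat) < (x k)%:R.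
    rewrite lt0r ler0n andbT; apply/negP => /eqP E; move: Hk; by rewrite E mul0r ltxx.
  exists k; apply/andP; split.
    by move: Hk; rewrite pmulr_rgt0.
  apply/forallP => l; apply/implyP => Hl.
  have := Hx l; rewrite (negbTE Hl) mulr0 => E0.
  have := @psumr_eq0P _ _ _ _ (fun k _ => tge l k) E0 k isT.
  by move/eqP; rewrite mulf_eq0 (negbTE (lt0r_neq0 xk0)).
pose pi j := odflt j [pick k | Qb j k].
have Hpi : forall j, Qb j (pi j).
  move=> j; rewrite /pi; case: pickP => [k //|N] /=.
  by have [k Hk] := HQ j; move: (N k); rewrite Hk.
have piinj : injective pi.
  move=> j1 j2 E; apply/eqP; apply/negPn/negP => Hne.
  have /andP [_ /forallP /(_ j2)] := Hpi j1.
  rewrite eq_sym Hne /= E => /eqP E2.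
  by have /andP [] := Hpi j2; rewrite E2 ltxx.
have [piinv piK piinvK] := injF_bij piinj.
have boff : forall k l, l != piinv k -> b k l = 0.
  move=> k l Hl; have /andP [_ /forallP /(_ l)] := Hpi (piinv k).
  by rewrite piinvK Hl => /eqP.
have gk : forall k, toQ (g k) = b k (piinv k) *: row (piinv k) (ZQ Z).
  move=> k; rewrite gE (bigD1 (piinv k)) //= big1 ?addr0 // => l Hl.
  by rewrite boff // scale0r.
have gval : forall k, toQ (g k) = (n (piinv k))%:R *: row (piinv k) (ZQ Z).
  move=> k; have gkk := gk k; set j := piinv k in gkk *.
  have [x Hx] := Ec j.
  have Hb : forall k', k' != k -> b k' j = 0.
    move=> k' Hk'; apply: boff; apply: contra Hk' => /eqP E; apply/eqP.
    by apply: (can_inj piinvK); rewrite -E.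
  have Hcb : (x k)%:R * b k j = (n j)%:R.
    have := Hx j; rewrite eqxx mulr1 => <-.
    rewrite (bigD1 k) //= big1 ?addr0 // => k' Hk'.
    by rewrite Hb // mulr0.
  set c := x k in Hcb *; set be := b k j in Hcb gkk *.
  have nj0 := (Hlev j).1.
  have nR : ((n j)%:R : rat) != 0 by rewrite pnatr_eq0 -lt0n.
  have c0 : (0 < c)%N.
    rewrite lt0n; apply/eqP => E; move: nR; by rewrite -Hcb E mul0r eqxx.
  have cR : (c%:R : rat) != 0 by rewrite pnatr_eq0 -lt0n.
  have bE : be = (n j)%:R / c%:R by rewrite -Hcb [_ * be]mulrC mulfK.
  pose q := (n j %/ c)%N; pose r0 := (n j %% c)%N.
  have nE : ((n j)%:R : rat) = q%:R * c%:R + r0%:R by rewrite -natrM -natrD -divn_eq.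
  have Hh : toQ (g k - row j Z *+ q) = (r0%:R / c%:R) *: toQ (row j Z).
    rewrite toQB toQMn gkk toQ_row -scalerBl; congr (_ *: _).
    by rewrite bE nE mulrDl mulfK // addrC addKr.
  have r00 : r0 = 0%N.
    apply/eqP; rewrite -leqn0 leqNgt; apply/negP => r0pos.
    have := (Hfirst j).2 (r0%:R / c%:R); rewrite divr_gt0 ?ltr0n // => /(_ isT (ex_intro _ _ Hh)).
    by rewrite ler_pdivlMr ?ltr0n // mul1r ler_nat leqNgt ltn_pmod.
  have bq : be = q%:R by rewrite bE nE r00 addr0 mulfK.
  have gq : g k = row j Z *+ q by apply: toQ_inj; rewrite toQMn gkk bq toQ_row.
  have Sq : S0 (row j Z *+ q) by rewrite -gq; exact: (gA k).2.
  have nqc : n j = (q * c)%N by rewrite {1}(divn_eq (n j) c) -/q -/r0 r00 addn0.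
  have q0 : (0 < q)%N by move: nj0; rewrite nqc muln_gt0 => /andP [].
  have qn : q = n j.
    apply/eqP; rewrite eqn_leq; apply/andP; split.
      by rewrite nqc leq_pmulr.
    rewrite leqNgt; apply/negP => lt; exact: ((Hlev j).2.2 q q0 lt Sq).
  by rewrite gkk bq qn.
move=> v Sv.
have [x Hx] := (fA v).1 (conj (HS0 _ Sv) Sv).
exists (fun j => x (pi j)).
rewrite -Hx fsum toQ_sum (reindex_inj piinj) /=; apply: eq_bigr => j _.
by rewrite toQMn gval piK natrM scalerA mulrC.
Qed.

Unset Implicit Arguments.

Theorem lemma3p3 (d : nat) (Z : 'M[int]_d) (S0 : 'rV[int]_d -> Prop)
  (n : 'I_d -> nat) (r : 'rV[int]_d -> 'I_d -> nat) (rho : 'I_d -> 'I_d) :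
  simplicial_full Z ->
  (forall i, first_lattice_pt (row i Z)) ->
  stacky_cone Z S0 ->
  is_level Z S0 n ->
  min_free_res (dual_lattice Z) r ->
  (forall i, corr_ray Z (dual_lattice Z) r i (rho i)) ->
  exists psi : 'rV[rat]_d -> 'I_d -> nat,
    (forall p, dual_lattice Z p -> target S0 (toQ p)) /\
    (forall m1 m2, target S0 m1 -> target S0 m2 ->
       forall i, psi (m1 + m2)%R i = (psi m1 i + psi m2 i)%N) /\
    (forall m1 m2, target S0 m1 -> target S0 m2 ->
       (forall i, psi m1 i = psi m2 i) -> m1 = m2) /\
    (forall x : 'I_d -> nat, exists m, target S0 m /\ forall i, psi m i = x i) /\
    (forall p, dual_lattice Z p -> forall i, psi (toQ p) i = (n (rho i) * r p i)%N).
Proof.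
move=> F Hfirst Hst Hlev Hr Hrho.
have [rinj rE] := ev_r F Hfirst Hr Hrho.
have [rinv rK rinvK] := injF_bij rinj.
have gen := S0_gen F Hfirst Hst Hlev.
pose w j := (n j)%:R *: row j (ZQ Z).
have T1 : forall m, target S0 m -> forall j, exists z : nat, pairQ m (w j) = z%:R.
  move=> m Hm j; have [z Hz] := Hm _ (Hlev j).2.1; exists z.
  by rewrite -Hz toQMn toQ_row.
have T2 : forall m, (forall j, exists z : nat, pairQ m (w j) = z%:R) -> target S0 m.
  move=> m H v Sv; have [x Hx] := gen v Sv.
  exists (\sum_j x j * `|numq (pairQ m (w j))|)%N.
  rewrite Hx pairQsumr natr_sum; apply: eq_bigr => j _.
  have [z Hz] := H j.
  by rewrite (natq Hz) [RHS]natrM -Hz /w !pairQZr natrM mulrA.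
have nR : forall j, ((n j)%:R : rat) != 0.
  by move=> j; rewrite pnatr_eq0 -lt0n; exact: (Hlev j).1.
exists (fun m i => `|numq (pairQ m (w (rho i)))|%N).
split.
  move=> p Hp v Sv; have Hv := Hp _ (Hst.1 v Sv).
  exists `|pairZ p v|%N.
  rewrite pairQZ natr_absz ger0_norm //.
  by rewrite -(ler0z rat) -pairQZ.
split.
  move=> m1 m2 H1 H2 i.
  have [z1 E1] := T1 _ H1 (rho i); have [z2 E2] := T1 _ H2 (rho i).
  rewrite (natq E1) (natq E2); apply: natq.
  by rewrite pairQDl E1 E2 natrD.
split.
  move=> m1 m2 H1 H2 H; apply: (pair_uniq F) => j.
  have := H (rinv j); rewrite rinvK.
  have [z1 E1] := T1 _ H1 j; have [z2 E2] := T1 _ H2 j.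
  rewrite (natq E1) (natq E2) => Ez.
  have : pairQ m1 (w j) = pairQ m2 (w j) by rewrite E1 E2 Ez.
  by rewrite /w !pairQZr => /(mulfI (nR j)).
split.
  move=> x.
  have [m Hm] := pair_exists (fun j => (x (rinv j))%:R / (n j)%:R) F.
  have Hw : forall j, pairQ m (w j) = (x (rinv j))%:R.
    by move=> j; rewrite /w pairQZr Hm mulrC divfK.
  exists m; split.
    by apply: T2 => j; exists (x (rinv j)); exact: Hw.
  by move=> i; apply: natq; rewrite Hw rK.
move=> p Hp i; apply: natq.
by rewrite /w pairQZr -evE // -rE // natrM.
Qed.
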